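(* Consider the following two-player game. Each player $i \in \{1,2\}$ privately knows her type $\theta_i$, her valuation of an indivisible object; types are drawn independently from a common absolutely continuous distribution $F$ with support $\Theta = (\underline{\theta}, \overline{\theta})$, $0 \le \underline{\theta} < \overline{\theta} \le \infty$, whose density $f$ is continuous and strictly positive on $(\underline{\theta}, \overline{\theta})$. Each player simultaneously chooses a stopping time $a_i \in [0,\infty]$; a (pure) strategy is a function $\sigma_i : \Theta \to [0,\infty]$. Payoffs are $u_i(a_i,a_{-i},\theta_i) = \theta_i - a_{-i}$ if $a_i > a_{-i}$, $\theta_i/2 - a_i$ if $a_i = a_{-i}$, and $-a_i$ if $a_i < a_{-i}$. Let $(\sigma_1,\sigma_2)$ be a Bayesian Nash equilibrium, and for $i\in\{1,2\}$ let $\overline{\theta}_i := \inf\{\theta \in \Theta : \sigma_i(\theta) = \infty\}$ (the lowest type of player $i$ that fights forever). Then at most one player has a positive mass of types choosing $\infty$, in the sense that $\max\{\overline{\theta}_1, \overline{\theta}_2\} = \overline{\theta}$.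
   Context: Equilibrium concept: Bayesian Nash equilibrium in pure strategies, each type maximizing expected payoff given the opponent's strategy and the prior $F$. The infimum of the empty set is taken to be $\overline{\theta}$. *)

(* Defs.v *)
From HB Require Import structures.
From mathcomp Require Import all_boot all_order all_algebra.
From mathcomp Require Import all_classical all_reals all_analysis.
From mathcomp Require Import measurable_realfun.
Set Implicit Arguments. Unset Strict Implicit. Unset Printing Implicit Defensive.
Import Order.TTheory GRing.Theory Num.Theory.
Import numFieldNormedType.Exports.
Local Open Scope classical_set_scope.
Local Open Scope ring_scope.
Local Open Scope ereal_scope.

Definition Theta {R : realType} (thl : R) (thh : \bar R) : set R :=
  [set x : R | (thl < x)%R /\ x%:E < thh].

Definition payoff {R : realType} (ai aj : \bar R) (th : R) : \bar R :=
  if aj < ai then th%:E - aj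
  else if ai == aj then (th / 2)%:E - ai
  else - ai.

Definition exp_payoff {R : realType} (P : probability R R) (thl : R) (thh : \bar R)
  (sj : R -> \bar R) (a : \bar R) (th : R) : \bar R :=
  \int[P]_(t in Theta thl thh) payoff a (sj t) th.

Definition strategy {R : realType} (thl : R) (thh : \bar R) (s : R -> \bar R) : Prop :=
  measurable_fun (Theta thl thh) s /\ (forall th, Theta thl thh th -> 0 <= s th).

Definition best_response {R : realType} (P : probability R R) (thl : R) (thh : \bar R)
  (si sj : R -> \bar R) : Prop :=
  forall th, Theta thl thh th -> forall a : \bar R, 0 <= a ->
    exp_payoff P thl thh sj a th <= exp_payoff P thl thh sj (si th) th.

Definition BNE {R : realType} (P : probability R R) (thl : R) (thh : \bar R)
  (s1 s2 : R -> \bar R) : Prop :=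
  [/\ strategy thl thh s1, strategy thl thh s2,
      best_response P thl thh s1 s2 & best_response P thl thh s2 s1].

Definition theta_bar {R : realType} (thl : R) (thh : \bar R) (s : R -> \bar R) : \bar R :=
  let S := [set th | Theta thl thh th /\ s th = +oo] in
  if `[< S = set0 >] then thh else ereal_inf (EFin @` S).

(* Main.v *)
Require Import Defs.
From HB Require Import structures.
From mathcomp Require Import all_boot all_order all_algebra.
From mathcomp Require Import all_classical all_reals all_analysis.
From mathcomp Require Import measurable_realfun.
From mathcomp Require Import lra.
Import Order.TTheory GRing.Theory Num.Theory.
Import numFieldNormedType.Exports.
Local Open Scope classical_set_scope.
Local Open Scope ring_scope.
Local Open Scope ereal_scope.

Lemma mTheta {R : realType} (thl : R) (thh : \bar R) : measurable (Theta thl thh).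
Proof.
have -> : Theta thl thh = `]thl, +oo[%classic `&` (setT `&` [set x : R | x%:E < thh]).
  apply/seteqP; split => x /=.
    by move=> [h1 h2]; rewrite in_itv /= andbT.
  by rewrite in_itv /= andbT => -[h1 [_ h2]].
apply: measurableI => //.
exact: (emeasurable_fun_infty_o measurableT (@EFin_measurable R setT)).
Qed.

Lemma payoff_inf {R : realType} (y : \bar R) (th : R) :
  payoff +oo y th = th%:E - y.
Proof.
rewrite /payoff; case: y => [r| |] //=.
by rewrite ltry.
Qed.

Lemma payoff0_ge0 {R : realType} (y : \bar R) (th : R) :
  0 <= y -> (0 <= th)%R -> 0 <= payoff 0 y th.
Proof.
move=> y0 th0; rewrite /payoff.
rewrite ltNge y0 /=.
case: eqP => _ /=; last by [].
idtac.
by rewrite sube0 lee_fin divr_ge0.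
Qed.

Lemma payoff_meas {R : realType} (thl : R) (thh : \bar R) (sj : R -> \bar R)
  (a : \bar R) (th : R) :
  measurable_fun (Theta thl thh) sj ->
  measurable_fun (Theta thl thh) (fun t => payoff a (sj t) th).
Proof.
move=> ms; have mT := mTheta thl thh.
rewrite /payoff.
have mlt : measurable_fun (Theta thl thh) (fun t => sj t < a).
  by apply: measurable_fun_lte => //.
have mF : measurable (Theta thl thh `&` (fun t => sj t < a) @^-1` [set false]).
  by apply: mlt => //.
have mF' : measurable_fun (Theta thl thh `&` (fun t => sj t < a) @^-1` [set false]) sj.
  by apply: measurable_funS ms => //; exact: subIsetl.
apply: measurable_fun_if => //.
- apply: emeasurable_funB => //.
  apply: measurable_funS ms => //; exact: subIsetl.
- apply: measurable_fun_if => //.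
  + by apply: measurable_fun_eqe => //.
Qed.
Lemma int_sj_fin {R : realType} (thl : R) (thh : \bar R) (P : probability R R)
  (sj : R -> \bar R) (th0 : R) :
  (0 <= thl)%R -> P (Theta thl thh) = 1 -> strategy thl thh sj -> Theta thl thh th0 ->
  exp_payoff P thl thh sj 0 th0 <= exp_payoff P thl thh sj +oo th0 ->
  \int[P]_(t in Theta thl thh) sj t < +oo.
Proof.
move=> thl0 PT [ms s0] Th0 H.
have mT := mTheta thl thh.
have th0p : (0 <= th0)%R by case: Th0 => h _; apply: ltW; apply: le_lt_trans h.
have H0 : 0 <= exp_payoff P thl thh sj 0 th0.
  by apply: integral_ge0 => t Tt; apply: payoff0_ge0 => //; exact: s0.
have E : (fun t => payoff +oo (sj t) th0) = (fun t => th0%:E - sj t).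
  by apply/funext => t; rewrite payoff_inf.
rewrite /exp_payoff E in H.
have {H0}H := le_trans H0 H.
set g := fun t => th0%:E - sj t.
have mg : measurable_fun (Theta thl thh) g.
  by apply: emeasurable_funB => //.
rewrite ltey; apply/eqP => Hinf.
have Hneg : \int[P]_(t in Theta thl thh) g^\- t = +oo.
  have : \int[P]_(t in Theta thl thh) sj t <=
         \int[P]_(t in Theta thl thh) (g^\- t + (cst th0%:E) t).
    apply: ge0_le_integral => //.
    - apply: emeasurable_funD => //; exact: measurable_funeneg.
    move=> t Tt; rewrite funenegE /g /=.
    case: (sj t) (s0 t Tt) => [r| |] //= r0.
    rewrite -EFin_max -EFinD lee_fin -lerBlDr le_max.
    by apply/orP; left; rewrite opprB.
  rewrite ge0_integralD //; last by apply: measurable_funeneg.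
  rewrite integral_cst //.
rewrite [X in _ * X](_ : _ = 1) ?mule1 ?Hinf; last exact: PT.
  have : 0 <= \int[P]_(t in Theta thl thh) g^\- t by apply: integral_ge0.
  by case: (\int[P]_(t in Theta thl thh) g^\- t).
have Hpos : \int[P]_(t in Theta thl thh) g^\+ t <= th0%:E.
  rewrite -[leRHS]mule1 -PT -integral_cst //.
  apply: ge0_le_integral => //.
  - exact: measurable_funepos.
  move=> t Tt; rewrite funeposE /g /= ge_max lee_fin th0p andbT.
  have := s0 t Tt; case: (sj t) => [r||] //= r0.
  - by rewrite -EFinB lee_fin; rewrite lee_fin in r0; lra.
  - by rewrite addeNy leNye.
move: H; rewrite -/g integralE Hneg.
have : 0 <= \int[P]_(t in Theta thl thh) g^\+ t by apply: integral_ge0.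
move: Hpos; case: (\int[P]_(t in Theta thl thh) g^\+ t) => //.
Qed.

Lemma null_inf {R : realType} (thl : R) (thh : \bar R) (P : probability R R)
  (sj : R -> \bar R) :
  strategy thl thh sj ->
  \int[P]_(t in Theta thl thh) sj t < +oo ->
  P (Theta thl thh `&` sj @^-1` [set +oo]) = 0.
Proof.
move=> [ms s0] Hint.
have mT := mTheta thl thh.
have mA : measurable (Theta thl thh `&` sj @^-1` [set +oo]) by apply: ms.
have : +oo * P (Theta thl thh `&` sj @^-1` [set +oo]) < +oo.
  rewrite -integral_cst //; apply: le_lt_trans Hint.
  rewrite (@eq_integral _ _ _ P _ sj); last first.
    by move=> t /[1!inE] -[_ ->].
  by apply: ge0_subset_integral => //.
have : 0 <= P (Theta thl thh `&` sj @^-1` [set +oo]) by [].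
rewrite le_eqVlt => /predU1P[<-//|h].
by rewrite gt0_mulye.
Qed.

Lemma payoff_fin {R : realType} (r s th : R) :
  payoff r%:E s%:E th =
  (if (s < r)%R then th - s else if r == s then th / 2 - r else - r)%:E.
Proof.
rewrite /payoff lte_fin eqe.
by case: ifP => _ //; case: ifP.
Qed.

Lemma G_val {R : realType} (r s th0 th : R) :
  (0 <= r)%R -> (0 <= s)%R -> (th0 < th)%R ->
  let G := ((payoff +oo s%:E th - payoff r%:E s%:E th) - payoff +oo s%:E th0)
            + payoff r%:E s%:E th0 in
  0 <= G /\ ((r <= s)%R -> ((th - th0) / 2)%:E <= G).
Proof.
move=> r0 s0 lt /=.
rewrite !payoff_inf !payoff_fin.
have [h|h|h] := ltrgtP s r;
  rewrite ?h ?eqxx ?(gt_eqF h) ?(lt_eqF h) /= -!EFinD !lee_fin;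
  (split; [lra | move=> hh; lra]).
Qed.

Lemma ereal4 {R : realType} (a b c d : \bar R) :
  a \is a fin_num -> b \is a fin_num -> c \is a fin_num -> d \is a fin_num ->
  a <= b -> d <= c -> ((a - b) - c) + d <= 0.
Proof.
case: a => [a| |] //; case: b => [b| |] //; case: c => [c| |] //;
  case: d => [d| |] // _ _ _ _.
rewrite !lee_fin => h1 h2.
lra.
Qed.

Lemma key_fin {R : realType} (thl : R) (thh : \bar R) (P : probability R R)
  (sj : R -> \bar R) (th0 th r : R) :
  (0 <= thl)%R -> P (Theta thl thh) = 1 -> strategy thl thh sj ->
  Theta thl thh th0 -> Theta thl thh th -> (th0 < th)%R -> (0 <= r)%R ->
  exp_payoff P thl thh sj r%:E th0 <= exp_payoff P thl thh sj +oo th0 ->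
  exp_payoff P thl thh sj +oo th <= exp_payoff P thl thh sj r%:E th ->
  \int[P]_(t in Theta thl thh) sj t < +oo ->
  P (Theta thl thh `&` sj @^-1` [set +oo]) = 0 ->
  P (Theta thl thh `&` [set t | r%:E <= sj t]) = 0.
Proof.
move=> thl0 PT [ms s0] T0 T1 lt r0 H0 H1 Hint HA.
have mT := mTheta thl thh.
set Th := Theta thl thh in PT ms s0 T0 T1 H0 H1 Hint HA mT *.
have th0p : (0 <= th0)%R by case: T0 => h _; apply: ltW; apply: le_lt_trans h.
have thp : (0 <= th)%R by case: T1 => h _; apply: ltW; apply: le_lt_trans h.
have isj : P.-integrable Th sj.
  apply/integrableP; split => //.
  rewrite (@eq_integral _ _ _ P _ sj) //.
  by move=> t /[1!inE] Tt; rewrite gee0_abs // s0.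
have iInf : forall phi : R, P.-integrable Th (fun t => payoff +oo (sj t) phi).
  move=> phi.
  have -> : (fun t => payoff +oo (sj t) phi) = (fun t => (EFin \o cst phi) t - sj t).
    by apply/funext => t; rewrite payoff_inf.
  apply: integrableB => //.
  exact: finite_measure_integrable_cst.
have iR : forall phi : R, (0 <= phi)%R -> P.-integrable Th (fun t => payoff r%:E (sj t) phi).
  move=> phi phi0.
  apply: (le_integrable mT (g := EFin \o cst (phi + r)%R)).
  - exact: payoff_meas.
  - move=> t Tt /=; have := s0 t Tt.
    case: (sj t) => [s| |] // s0'.
    + rewrite payoff_fin; rewrite lee_fin in s0'.
      rewrite !abse_EFin lee_fin (ger0_norm (addr_ge0 phi0 r0)).
      case: ifPn => h1; last case: ifPn => h2.
      * rewrite ler_norml; apply/andP; split; lra.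
      * rewrite ler_norml; apply/andP; split; lra.
      * rewrite normrN ger0_norm //; lra.
    + rewrite /payoff ltNge leey /= lee_fin normrN (ger0_norm r0).
      rewrite (ger0_norm (addr_ge0 phi0 r0)); lra.
  - exact: finite_measure_integrable_cst.
set F1 := fun t => payoff +oo (sj t) th.
set F2 := fun t => payoff r%:E (sj t) th.
set F3 := fun t => payoff +oo (sj t) th0.
set F4 := fun t => payoff r%:E (sj t) th0.
set G := fun t => ((F1 t - F2 t) - F3 t) + F4 t.
have iF1 : P.-integrable Th F1 by apply: iInf.
have iF2 : P.-integrable Th F2 by apply: iR.
have iF3 : P.-integrable Th F3 by apply: iInf.
have iF4 : P.-integrable Th F4 by apply: iR.
have i12 : P.-integrable Th (fun t => F1 t - F2 t) by apply: integrableB.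
have i123 : P.-integrable Th (fun t => (F1 t - F2 t) - F3 t) by apply: integrableB.
have IG : \int[P]_(t in Th) G t <= 0.
  rewrite /G (integralD mT i123 iF4) (integralB mT i12 iF3) (integralB mT iF1 iF2).
  apply: ereal4; try exact: integrable_fin_num.
  - exact: H1.
  - exact: H0.
have iG : P.-integrable Th G by apply: integrableD.
have mG : measurable_fun Th G by case/integrableP: iG.
set G' := fun t => if sj t == +oo then 0 else G t.
have mG' : measurable_fun Th G'.
  apply: measurable_fun_if => //.
  - by apply: measurable_fun_eqe => //.
  - apply: measurable_funS mG => //; exact: subIsetl.
have Hae : ae_eq P Th G G'.
  exists (Th `&` sj @^-1` [set +oo]); split => //; first by apply: ms.
  move=> t /= /not_implyP [Tt]; rewrite /G'.
  by case: eqP.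
have IG' : \int[P]_(t in Th) G' t <= 0 by rewrite -(ae_eq_integral G' G mT mG mG' Hae).
have G'0 : forall t, Th t -> 0 <= G' t.
  move=> t Tt; rewrite /G' /G /F1 /F2 /F3 /F4.
  have := s0 t Tt; case: (sj t) => [s| |] //= s0'.
  rewrite lee_fin in s0'.
  by case: (G_val _ _ _ _ r0 s0' lt).
set c := ((th - th0) / 2)%R.
have c0 : (0 < c)%R by rewrite /c; lra.
set E := Th `&` [set t | r%:E <= sj t].
have mE : measurable E by apply: emeasurable_fun_c_infty.
set A := Th `&` sj @^-1` [set +oo].
have mA : measurable A by apply: ms.
set E' := E `\` A.
have mE' : measurable E' by apply: measurableD.
have E'T : E' `<=` Th by move=> t [[]].
have G'c : forall t, E' t -> c%:E <= G' t.
  move=> t [[Tt /= rs] nA]; rewrite /G' /G /F1 /F2 /F3 /F4.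
  have nI : sj t != +oo by apply/eqP => h; apply: nA; split.
  move: rs nI; have := s0 t Tt; case: (sj t) => [s| |] //= s0' rs nI.
  rewrite ?lee_fin in s0'; rewrite ?lee_fin in rs.
  by case: (G_val _ _ _ _ r0 s0' lt) => _ /(_ rs).
have HE' : c%:E * P E' <= 0.
  rewrite -integral_cst //; apply: le_trans IG'.
  apply: le_trans (_ : \int[P]_(t in E') G' t <= _).
    apply: ge0_le_integral => //.
    - by move=> t _ /=; rewrite lee_fin ltW.
    - exact: measurable_funS mG'.
  exact: ge0_subset_integral.
have PE' : P E' = 0.
  apply/eqP; rewrite eq_le measure_ge0 andbT.
  move: HE'; case: (P E') => [x| |] //.
  - rewrite -EFinM !lee_fin => h; rewrite pmulr_rle0 // in h.
  - by rewrite mulry gtr0_sg // mul1e.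
apply/eqP; rewrite eq_le measure_ge0 andbT.
have sub : E `<=` E' `|` A.
  move=> t Et; have [At|nAt] := pselect (A t); first by right.
  by left.
have mEA : measurable (E' `|` A) by apply: measurableU.
apply: le_trans (le_measure _ _ _ sub) _; rewrite ?inE //.
apply: (le_trans (measureU2 _ mE' mA)).
have h1 : P E' <= 0 by rewrite PE'.
have h2 : P A <= 0 by rewrite HA.
apply: le_trans (leeD h1 h2) _.
by rewrite adde0.
Qed.

Lemma key {R : realType} (thl : R) (thh : \bar R) (P : probability R R)
  (si sj : R -> \bar R) (th0 th : R) :
  (0 <= thl)%R -> P (Theta thl thh) = 1 -> strategy thl thh si -> strategy thl thh sj ->
  best_response P thl thh si sj ->
  Theta thl thh th0 -> si th0 = +oo -> Theta thl thh th -> (th0 < th)%R ->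
  P (Theta thl thh `&` [set t | si th <= sj t]) = 0.
Proof.
move=> thl0 PT sti stj br T0 i0 T1 lt.
have H00 := br th0 T0 0 (lexx _); rewrite i0 in H00.
have Hint := int_sj_fin _ _ _ _ _ thl0 PT stj T0 H00.
have HA := null_inf _ _ P _ stj Hint.
case: sti => _ si0.
have := si0 th T1; case E: (si th) => [r| |] // r0.
- rewrite lee_fin in r0.
  apply: (key_fin _ _ _ _ _ _ _ thl0 PT stj T0 T1 lt r0 _ _ Hint HA).
  + by rewrite -i0; apply: br => //; rewrite lee_fin.
  + by rewrite -E; apply: br => //; rewrite leey.
- rewrite -HA; congr (P _); apply/seteqP; split => t [Tt /= h]; split => //.
  + by apply/eqP; rewrite -leye_eq.
  + by rewrite h.
Qed.

Lemma tb_le {R : realType} (thl : R) (thh : \bar R) (s : R -> \bar R) :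
  theta_bar thl thh s <= thh.
Proof.
rewrite /theta_bar; case: asboolP => [_|h] //.
have /set0P [x [Tx sx]] : [set th | Theta thl thh th /\ s th = +oo] != set0.
  by apply/eqP.
apply: le_trans (ltW (proj2 Tx)).
by apply: ge_ereal_inf; exists x%:E => //; exists x.
Qed.

Lemma tb_lt {R : realType} (thl : R) (thh : \bar R) (s : R -> \bar R) :
  theta_bar thl thh s < thh -> exists x, Theta thl thh x /\ s x = +oo.
Proof.
rewrite /theta_bar; case: asboolP => [_|h]; first by rewrite ltxx.
have /set0P [x [Tx sx]] : [set th | Theta thl thh th /\ s th = +oo] != set0.
  by apply/eqP.
by move=> _; exists x.
Qed.

Lemma posT {R : realType} (thl : R) (thh : \bar R) (P : probability R R) (f : R -> R) (m : R) :
  (0 <= thl)%R ->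
  (forall A : set R, measurable A ->
     P A = \int[lebesgue_measure]_(x in A) (f x)%:E) ->
  (forall x, Theta thl thh x -> {for x, continuous f}) ->
  (forall x, Theta thl thh x -> (0 < f x)%R) ->
  Theta thl thh m ->
  0 < P (Theta thl thh `&` `]m, +oo[%classic).
Proof.
move=> thl0 Pf fc fp Tm.
set T := Theta thl thh `&` `]m, +oo[%classic.
have mT : measurable T by apply: measurableI; [exact: mTheta | exact: measurable_itv].
have [x [d0 [d0p Hx]]] : exists x d0, (0 < d0)%R /\ (forall y, `|x - y| < d0 -> T y)%R.
  case: Tm => lm; case E: thh => [h| |] //= mh.
  - exists ((m + h)/2)%R, ((h - m)/2)%R; rewrite lte_fin in mh; split; first lra.
    move=> y; rewrite ltr_distlC => /andP [h1 h2].
    split; [split|] => /=.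
    + lra.
    + rewrite E lte_fin; lra.
    + rewrite in_itv /= andbT; lra.
  - exists (m + 1)%R, 1%R; split; first lra.
    move=> y; rewrite ltr_distlC => /andP [h1 h2].
    split; [split|] => /=.
    + lra.
    + by rewrite E ltry.
    + rewrite in_itv /= andbT; lra.
have Tx : T x by apply: Hx; rewrite subrr normr0.
have fx := fp x Tx.1.
have fx2 : (0 < f x / 2)%R by apply: divr_gt0.
have := cvgr_dist_lt f (f x) (fc x Tx.1) _ fx2.
move=> /(_ _) hn; have [e /= e0 He] := proj1 (nbhs_ballP _ _) hn.
set d := Num.min e d0.
have dp : (0 < d)%R by rewrite lt_min e0 d0p.
have BT : ball x d `<=` T.
  move=> y; rewrite -ball_normE /= lt_min => /andP [_ h]; exact: Hx.
have Bf : forall y, ball x d y -> (f x / 2 < f y)%R.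
  move=> y By; have : ball x e y.
    by move: By; rewrite -!ball_normE /= lt_min => /andP [].
  move/He; rewrite /= ltr_distlC => /andP [h1 h2]; lra.
have mB := measurable_ball x d.
apply: (lt_le_trans _ (le_measure _ _ _ BT)); rewrite ?inE //.
suff h : 0 < P (ball x d) by exact: h.
rewrite Pf //.
apply: (@lt_le_trans _ _ ((f x / 2) * (d *+ 2))%:E).
  by rewrite lte_fin; apply: mulr_gt0 => //; rewrite pmulrn_rgt0.
rewrite EFinM -(lebesgue_measure_ball x (ltW dp)) -integral_cst //.
apply: ge0_le_integral => //.
- by move=> y _; rewrite lee_fin ltW.
- apply/measurable_EFinP; apply: open_continuous_measurable_fun; first exact: ball_open.
  by move=> y /[1!inE] By; apply: fc; exact: (BT y By).1.
- by move=> y By; rewrite lee_fin ltW // Bf.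
Qed.

Theorem lemma4 (R : realType) (thl : R) (thh : \bar R)
  (P : probability R R) (f : R -> R)
  (s1 s2 : R -> \bar R) :
  (0 <= thl)%R -> thl%:E < thh ->
  (forall A : set R, measurable A ->
     P A = \int[lebesgue_measure]_(x in A) (f x)%:E) ->
  P (Theta thl thh) = 1 ->
  (forall x, Theta thl thh x -> {for x, continuous f}) ->
  (forall x, Theta thl thh x -> (0 < f x)%R) ->
  BNE P thl thh s1 s2 ->
  maxe (theta_bar thl thh s1) (theta_bar thl thh s2) = thh.
Proof.
move=> thl0 lt Pf PT fc fp [st1 st2 br1 br2].
have le1 := tb_le thl thh s1; have le2 := tb_le thl thh s2.
move: le1; rewrite le_eqVlt => /predU1P[->|lt1].
  by apply/max_idPl.
move: le2; rewrite le_eqVlt => /predU1P[->|lt2].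
  by apply/max_idPr; exact: ltW.
exfalso.
have [t1 [T1 i1]] := tb_lt _ _ _ lt1.
have [t2 [T2 i2]] := tb_lt _ _ _ lt2.
set m := Num.max t1 t2.
have Tm : Theta thl thh m.
  by rewrite /m maxEle; case: ifP.
have t1m : (t1 <= m)%R by rewrite /m le_max lexx.
have t2m : (t2 <= m)%R by rewrite /m le_max lexx orbT.
have mTh := mTheta thl thh.
set T := Theta thl thh `&` `]m, +oo[%classic.
have PosT : 0 < P T := posT _ _ _ _ _ thl0 Pf fc fp Tm.
have mT : measurable T by apply: measurableI => //; exact: measurable_itv.
have TT : forall t, T t -> Theta thl thh t /\ (m < t)%R.
  by move=> t [Tt]; rewrite /= in_itv /= andbT.
have K1 : forall t, T t -> P (Theta thl thh `&` [set u | s1 t <= s2 u]) = 0.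
  move=> t /TT [Tt mt].
  apply: (key _ _ _ _ _ _ _ thl0 PT st1 st2 br1 T1 i1 Tt).
  exact: le_lt_trans t1m mt.
have K2 : forall t, T t -> P (Theta thl thh `&` [set u | s2 t <= s1 u]) = 0.
  move=> t /TT [Tt mt].
  apply: (key _ _ _ _ _ _ _ thl0 PT st2 st1 br2 T2 i2 Tt).
  exact: le_lt_trans t2m mt.
have ms2 : measurable_fun (Theta thl thh) s2 by case: st2.
set z := ereal_inf (s1 @` T).
have z0 : 0 <= z.
  apply/ereal_infP => y [t Tt <-]; case: st1 => _ h; exact: h t (TT t Tt).1.
have mS : measurable (Theta thl thh `&` [set u | z < s2 u]).
  exact: emeasurable_fun_o_infty.
have Z : P (Theta thl thh `&` [set u | z < s2 u]) = 0.
  apply/(negligibleP _ mS).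
  move: z0; case E: z => [z'| |] // z0'.
  - pose N := fun n : nat => Theta thl thh `&` [set u | (z' + n.+1%:R^-1)%:E <= s2 u].
    have NN : forall n, P.-negligible (N n).
      move=> n.
      have : ereal_inf (s1 @` T) < (z' + n.+1%:R^-1)%:E.
        by rewrite -/z E lte_fin ltrDl invr_gt0 ltr0n.
      case/ereal_inf_lt => _ [t Tt <-] hlt.
      exists (Theta thl thh `&` [set u | s1 t <= s2 u]); split.
      + exact: emeasurable_fun_c_infty.
      + exact: K1.
      + by move=> u [Tu h]; split => //=; apply: le_trans (ltW hlt) h.
    apply: negligibleS (negligible_bigcup NN).
    move=> u [Tu /= h].
    case E2: (s2 u) h => [y| |] // h.
    + rewrite lte_fin in h; have [k hk] := ltr_add_invr h.
      by exists k => //; split => //=; rewrite E2 lee_fin ltW.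
    + by exists 0%N => //; split => //=; rewrite E2 leey.
  - exists set0; split => //; move=> u [_ /=]; rewrite ltNge leey.
    by [].
have [t' [Tt' h']] : exists t', T t' /\ s2 t' <= z.
  apply: contrapT => nex.
  have : P T <= P (Theta thl thh `&` [set u | z < s2 u]).
    apply: le_measure; rewrite ?inE //.
    move=> u Tu; split; first exact: (TT u Tu).1.
    rewrite /= ltNge; apply/negP => hle; apply: nex; exists u; split => //.
  move=> h; have := lt_le_trans PosT h.
  by rewrite [X in _ < X](_ : _ = 0) ?ltxx //; exact: Z.
have : P T <= P (Theta thl thh `&` [set u | s2 t' <= s1 u]).
  apply: le_measure; rewrite ?inE //.
  - by apply: emeasurable_fun_c_infty => //; case: st1.
  move=> u Tu; split; first exact: (TT u Tu).1.
  rewrite /=; apply: le_trans h' _.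
  by apply: ge_ereal_inf; exists (s1 u) => //; exists u.
by rewrite K2 // => /(lt_le_trans PosT); rewrite ltxx.
Qed.
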